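(* Let $H$ be a finite set of hyperplanes in $\mathbb{R}^d$ in general position with respect to the coordinate frame, meaning that no flat of intersection of hyperplanes of $H$ is parallel to a coordinate axis. For every prism $\sigma$ of the vertical decomposition $\mathrm{VD}(H)$, there is a subset $D\subseteq H$ with $|D|\le 2d$ such that $\sigma$ is a prism of $\mathrm{VD}(D)$. That is, vertical decomposition of hyperplane arrangements has combinatorial dimension $2d$.
   Context: Vertical decomposition $\mathrm{VD}$ of a convex polyhedron $C\subseteq\mathbb{R}^d$ (coordinates $x_1,\dots,x_d$) is defined recursively on $d$. First stage: for a facet $f^+$ on the upper boundary of $C$ (with respect to $x_d$) and a facet $f^-$ on its lower boundary, let $P$ be the intersection of their vertical projections onto $x_d=0$. If $P$ is $(d-1)$-dimensional, the first-stage prism is $\{p\in C:\ \text{the projection of } p \text{ lies in } P\}$. Its ceiling is on the hyperplane of $f^+$ and its floor on that of $f^-$. For unbounded $C$, prisms may have only a floor or only a ceiling. Recursion: $P$ is a convex polyhedron in $\mathbb{R}^{d-1}$, with coordinates $x_1,\dots,x_{d-1}$. It is vertically decomposed recursively in the $x_{d-1}$-direction, and each resulting prism is lifted back into the first-stage prism. Base case: in dimension 1 the polyhedron, an interval, is its own decomposition. $\mathrm{VD}(H)$ is the union of the decompositions of all cells of the arrangement $\mathcal{A}(H)$ of all dimensions. A lower-dimensional cell is decomposed inside its supporting flat, with a generic coordinate choice there. *)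

(* Defs.v *)
From HB Require Import structures.
From mathcomp Require Import all_boot all_order all_algebra.
Set Implicit Arguments. Unset Strict Implicit. Unset Printing Implicit Defensive.
Import Order.TTheory GRing.Theory Num.Theory.
Local Open Scope ring_scope.

Section VD.
Variable R : realFieldType.

Definition pt (k : nat) := 'rV[R]_k.

Definition dotv k (a x : pt k) : R := \sum_(i < k) a 0 i * x 0 i.

(* a hyperplane {x | a . x = b} is given by (a, b) with a <> 0 *)
Definition hyp (d : nat) := (pt d * R)%type.
Definition hval d (h : hyp d) (x : pt d) : R := dotv h.1 x - h.2.

Definition full_dim k (S : pt k -> Prop) : Prop :=
  exists (x : pt k) (e : R), 0 < e /\
    forall y : pt k, (forall i, `|y 0 i - x 0 i| < e) -> S y.

Definition proj j (x : pt j.+1) : pt j :=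
  \row_(i < j) x 0 (widen_ord (leqnSn j) i).

Definition im_proj j (S : pt j.+1 -> Prop) : pt j -> Prop :=
  fun y => exists x, S x /\ proj x = y.

(* upper / lower facets of C in R^(j+1) w.r.t. the last coordinate x_(j+1):
   f = C /\ h for a supporting hyperplane h = {a.x = b}, C below (resp. above) h,
   and f is j-dimensional (its vertical projection has nonempty interior). *)
Definition upper_facet j (C f : pt j.+1 -> Prop) : Prop :=
  exists (a : pt j.+1) (b : R), 0 < a 0 ord_max /\
    (forall x, C x -> dotv a x <= b) /\
    (forall x, f x <-> (C x /\ dotv a x = b)) /\
    full_dim (im_proj f).

Definition lower_facet j (C f : pt j.+1 -> Prop) : Prop :=
  exists (a : pt j.+1) (b : R), a 0 ord_max < 0 /\
    (forall x, C x -> dotv a x <= b) /\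
    (forall x, f x <-> (C x /\ dotv a x = b)) /\
    full_dim (im_proj f).

(* the possible bases P of first-stage prisms of C *)
Definition stage_base j (C : pt j.+1 -> Prop) (P : pt j -> Prop) : Prop :=
  (exists fu fl, upper_facet C fu /\ lower_facet C fl /\
     forall y, P y <-> (im_proj fu y /\ im_proj fl y))
  \/ ((~ exists f, upper_facet C f) /\ exists fl, lower_facet C fl /\
        forall y, P y <-> im_proj fl y)
  \/ ((~ exists f, lower_facet C f) /\ exists fu, upper_facet C fu /\
        forall y, P y <-> im_proj fu y)
  \/ ((~ exists f, upper_facet C f) /\ (~ exists f, lower_facet C f) /\
        forall y, P y <-> im_proj C y).

(* vd1 j C s : s is a prism of the vertical decomposition of C in R^(j+1) *)
Fixpoint vd1 (j : nat) : (pt j.+1 -> Prop) -> (pt j.+1 -> Prop) -> Prop :=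
  match j return (pt j.+1 -> Prop) -> (pt j.+1 -> Prop) -> Prop with
  | 0 => fun C s => forall x, s x <-> C x
  | j'.+1 => fun C s =>
      exists (P tau : pt j'.+1 -> Prop),
        stage_base C P /\ full_dim P /\ vd1 P tau /\
        forall x, s x <-> (C x /\ tau (proj x))
  end.

Definition vd (k : nat) : (pt k -> Prop) -> (pt k -> Prop) -> Prop :=
  match k return (pt k -> Prop) -> (pt k -> Prop) -> Prop with
  | 0 => fun C s => forall x, s x <-> C x
  | j.+1 => fun C s => vd1 C s
  end.

(* closure of the cell of the arrangement A(H) containing x0 *)
Definition closed_cell d (H : seq (hyp d)) (x0 x : pt d) : Prop :=
  forall h, h \in H ->
    (hval h x0 = 0 -> hval h x = 0) /\
    (0 < hval h x0 -> 0 <= hval h x) /\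
    (hval h x0 < 0 -> hval h x <= 0).

(* supporting flat (affine hull) of the cell containing x0 *)
Definition supp_flat d (H : seq (hyp d)) (x0 x : pt d) : Prop :=
  forall h, h \in H -> hval h x0 = 0 -> hval h x = 0.

Definition frame_pt d k (o : pt d) (M : 'M[R]_(k, d)) (u : pt k) : pt d :=
  o + u *m M.

(* s is a prism of VD(H), coming from a cell whose supporting flat is the
   image of the frame (o, M), decomposed in the coordinates of that frame *)
Definition prism_via d (H : seq (hyp d)) k (o : pt d) (M : 'M[R]_(k, d))
    (s : pt d -> Prop) : Prop :=
  exists x0 : pt d,
    (forall x, supp_flat H x0 x <-> exists u, x = frame_pt o M u) /\
    exists tau : pt k -> Prop,
      vd (fun u => closed_cell H x0 (frame_pt o M u)) tau /\
      forall x, s x <-> exists u, tau u /\ x = frame_pt o M u.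

Definition flat_of d (H : seq (hyp d)) (G : pt d -> Prop) : Prop :=
  exists S : seq (hyp d), {subset S <= H} /\ S != [::] /\ (exists x, G x) /\
    forall x, G x <-> (forall h, h \in S -> hval h x = 0).

Definition parallel d (G : pt d -> Prop) (v : pt d) : Prop :=
  forall x (t : R), G x -> G (x + t *: v).

Definition gen_pos d (H : seq (hyp d)) : Prop :=
  forall G, flat_of H G -> forall i : 'I_d, ~ parallel G (delta_mx 0 i).

(* a generic coordinate frame inside a flat: the induced arrangement on the
   flat is in general position w.r.t. the frame's axes *)
Definition generic_frame d (H : seq (hyp d)) k (o : pt d) (M : 'M[R]_(k, d))
  : Prop :=
  row_free M /\
  forall G, flat_of H G ->
    (forall x, G x -> exists u, x = frame_pt o M u) ->
    (exists u, ~ G (frame_pt o M u)) ->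
    forall i : 'I_k, ~ parallel G (row i M).

End VD.

(* Main.v *)
Require Import Defs.
From HB Require Import structures.
From mathcomp Require Import all_boot all_order all_algebra.
From mathcomp Require Import ring lra zify.
From Stdlib Require Import Classical FunctionalExtensionality PropExtensionality.
Import Order.TTheory GRing.Theory Num.Theory.
Local Open Scope ring_scope.
Set Implicit Arguments. Unset Strict Implicit.

Section Aux.
Variable R : realFieldType.
Implicit Types (j k : nat).

Definition ext j (y : pt R j) (z : R) : pt R j.+1 :=
  \row_(i < j.+1) (if insub (i : nat) is Some i' then y 0 i' else z).

Lemma proj_ext j (y : pt R j) z : proj (ext y z) = y.
Proof.
apply/rowP => i; rewrite !mxE /=.
by rewrite insubT ?ltn_ord //= => h; congr (y 0 _); apply: val_inj.
Qed.

Lemma ext_last j (y : pt R j) z : ext y z 0 ord_max = z.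
Proof. by rewrite mxE insubN //= ltnn. Qed.

Lemma ext_proj j (x : pt R j.+1) : x = ext (proj x) (x 0 ord_max).
Proof.
apply/rowP => i; rewrite !mxE.
case: insubP => [i' hi ei|hi].
  by rewrite mxE; congr (x 0 _); apply: val_inj; rewrite /= ei.
have -> : i = ord_max by apply: val_inj => /=; move: (ltn_ord i); rewrite ltnS leq_eqVlt (negbTE hi) orbF => /eqP.
by [].
Qed.

Lemma dotv_split j (a x : pt R j.+1) :
  dotv a x = dotv (proj a) (proj x) + a 0 ord_max * x 0 ord_max.
Proof.
rewrite /dotv big_ord_recr /=; congr (_ + _).
by apply: eq_bigr => i _; rewrite !mxE.
Qed.

Lemma dotv_ext j (a : pt R j.+1) y z :
  dotv a (ext y z) = dotv (proj a) y + a 0 ord_max * z.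
Proof. by rewrite dotv_split proj_ext ext_last. Qed.

Lemma dotvDl k (a b x : pt R k) : dotv (a + b) x = dotv a x + dotv b x.
Proof. by rewrite /dotv -big_split; apply: eq_bigr => i _; rewrite mxE mulrDl. Qed.

Lemma dotvZl k t (a x : pt R k) : dotv (t *: a) x = t * dotv a x.
Proof. by rewrite /dotv mulr_sumr; apply: eq_bigr => i _; rewrite mxE mulrA. Qed.

Lemma dotvNl k (a x : pt R k) : dotv (- a) x = - dotv a x.
Proof. by rewrite -scaleN1r dotvZl mulN1r. Qed.

Lemma dotvDr k (a x y : pt R k) : dotv a (x + y) = dotv a x + dotv a y.
Proof. by rewrite /dotv -big_split; apply: eq_bigr => i _; rewrite mxE mulrDr. Qed.

Lemma dotvZr k t (a x : pt R k) : dotv a (t *: x) = t * dotv a x.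
Proof. by rewrite /dotv mulr_sumr; apply: eq_bigr => i _; rewrite mxE; ring. Qed.

Lemma dotvNr k (a x : pt R k) : dotv a (- x) = - dotv a x.
Proof. by rewrite -scaleN1r dotvZr mulN1r. Qed.

Lemma dotvBr k (a x y : pt R k) : dotv a (x - y) = dotv a x - dotv a y.
Proof. by rewrite dotvDr dotvNr. Qed.

Lemma dotv0r k (a : pt R k) : dotv a 0 = 0.
Proof. by rewrite /dotv big1 // => i _; rewrite mxE mulr0. Qed.

Lemma dotv0l k (a : pt R k) : dotv 0 a = 0.
Proof. by rewrite /dotv big1 // => i _; rewrite mxE mul0r. Qed.

Lemma projB j (a b : pt R j.+1) : proj (a - b) = proj a - proj b.
Proof. by apply/rowP => i; rewrite !mxE. Qed.

Lemma projZ j t (a : pt R j.+1) : proj (t *: a) = t *: proj a.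
Proof. by apply/rowP => i; rewrite !mxE. Qed.


Definition hl j (c : hyp R j.+1) := c.1 0 ord_max.
Definition phi j (c : hyp R j.+1) (y : pt R j) := (c.2 - dotv (proj c.1) y) / hl c.
Definition comp j (l c : hyp R j.+1) : hyp R j :=
  (proj c.1 - (hl c / hl l) *: proj l.1, c.2 - hl c * l.2 / hl l).
Definition polyh k (L : seq (hyp R k)) (x : pt R k) : Prop :=
  forall c, c \in L -> hval c x <= 0.

Lemma hval_ext j (c : hyp R j.+1) y z :
  hval c (ext y z) = dotv (proj c.1) y + hl c * z - c.2.
Proof. by rewrite /hval dotv_ext. Qed.

Lemma hval_phi j (c : hyp R j.+1) y z : hl c != 0 ->
  hval c (ext y z) = hl c * (z - phi c y).
Proof. by move=> h; rewrite hval_ext /phi; field. Qed.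

Lemma hval_comp j (l c : hyp R j.+1) y : hl l != 0 ->
  hval (comp l c) y = hval c (ext y (phi l y)).
Proof.
move=> h; rewrite hval_ext /hval /comp /phi /= dotvDl dotvNl dotvZl.
by field.
Qed.

Lemma hval_shift j (c : hyp R j.+1) y z z' :
  hval c (ext y z') = hval c (ext y z) + hl c * (z' - z).
Proof. rewrite !hval_ext; ring. Qed.

Lemma polyh_comp j (l : hyp R j.+1) L y : hl l != 0 ->
  polyh (map (comp l) L) y <-> polyh L (ext y (phi l y)).
Proof.
move=> h; split=> H c hc.
  by rewrite -hval_comp //; apply: H; apply: map_f.
by case/mapP: hc => c' hc' ->; rewrite hval_comp //; apply: H.
Qed.

Definition aff k (g : pt R k -> R) := exists w kap, forall y, g y = dotv w y + kap.

Lemma aff_phi j (c : hyp R j.+1) : aff (phi c).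
Proof.
exists (- (hl c)^-1 *: proj c.1), (c.2 / hl c) => y.
by rewrite /phi dotvZl; ring.
Qed.

Lemma aff_sub k (f g : pt R k -> R) : aff f -> aff g -> aff (fun y => f y - g y).
Proof.
move=> [w1 [k1 h1]] [w2 [k2 h2]]; exists (w1 - w2), (k1 - k2) => y.
by rewrite h1 h2 dotvDl dotvNl; ring.
Qed.

Lemma aff_scale k t (f : pt R k -> R) : aff f -> aff (fun y => t * f y).
Proof.
move=> [w1 [k1 h1]]; exists (t *: w1), (t * k1) => y.
by rewrite h1 dotvZl; ring.
Qed.

Definition inball k (y0 : pt R k) e (y : pt R k) := forall i, `|y 0 i - y0 0 i| < e.

Lemma dotv_bound k (w v : pt R k) e : (forall i, `|v 0 i| <= e) ->
  `|dotv w v| <= (\sum_i `|w 0 i|) * e.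
Proof.
move=> hv; rewrite /dotv mulr_suml.
apply: le_trans (ler_norm_sum _ _ _) _.
apply: ler_sum => i _; rewrite normrM; apply: ler_wpM2l => //.
Qed.

Lemma sumabs_ge0 k (w : pt R k) : 0 <= \sum_i `|w 0 i|.
Proof. by apply: sumr_ge0 => i _. Qed.

Lemma aff_cont k (g : pt R k -> R) y1 : aff g -> 0 < g y1 ->
  exists e1, 0 < e1 /\ forall y, inball y1 e1 y -> 0 < g y.
Proof.
move=> [w [kap hg]] gp.
set S := \sum_i `|w 0 i|.
have S0 : 0 <= S by apply: sumabs_ge0.
exists (g y1 / (S + 1)); split; first by apply: divr_gt0 => //; lra.
move=> y hy.
have hb : `|dotv w (y - y1)| <= S * (g y1 / (S + 1)).
  apply: dotv_bound => i; rewrite !mxE; apply: ltW; exact: (hy i).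
have e : g y = g y1 + dotv w (y - y1) by rewrite !hg dotvBr; ring.
have hS : S * (g y1 / (S + 1)) < g y1.
  rewrite mulrA ltr_pdivrMr; last by lra.
  nra.
move: hb; rewrite ler_norml => /andP [h1 _]; rewrite e; lra.
Qed.

Lemma absle_sum k (v : pt R k) i : `|v 0 i| <= \sum_i `|v 0 i|.
Proof.
rewrite (bigD1 i) //=; rewrite lerDl; apply: sumr_ge0 => ? _; exact: normr_ge0.
Qed.

Lemma aff_zero k (g : pt R k -> R) y1 e : aff g -> 0 < e ->
  (forall y, inball y1 e y -> g y = 0) -> forall y, g y = 0.
Proof.
move=> [w [kap hg]] e0 hz y.
set S := \sum_i `|(y - y1) 0 i|.
have S0 : 0 <= S by apply: sumabs_ge0.
set t := e / (S + 1).
have t0 : 0 < t by apply: divr_gt0 => //; lra.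
have hin : inball y1 e (y1 + t *: (y - y1)).
  move=> i.
  have -> : (y1 + t *: (y - y1)) 0 i - y1 0 i = t * (y - y1) 0 i by rewrite !mxE; ring.
  rewrite normrM (gtr0_norm t0).
  have := absle_sum (y - y1) i; rewrite -/S => hs.
  have : t * (S + 1) = e by rewrite /t; field; lra.
  nra.
have h1 := hz _ hin.
have h2 : g y1 = 0 by apply: hz => i; rewrite subrr normr0.
move: h1 h2; rewrite !hg dotvDr dotvZr dotvBr => h1 h2.
have : t * (dotv w y - dotv w y1) = 0 by lra.
by move/eqP; rewrite mulf_eq0 gt_eqF //= subr_eq0 => /eqP h3; lra.
Qed.

Lemma inball_half k (y1 y2 : pt R k) e : inball y1 (e / 2) y2 ->
  forall y, inball y2 (e / 2) y -> inball y1 e y.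
Proof.
move=> h12 y h i; have a := h12 i; have b := h i.
have := ler_distD (y2 0 i) (y 0 i) (y1 0 i).
rewrite /inball; lra.
Qed.

Lemma envelope k (T : eqType) (F : T -> pt R k -> R) (s : seq T) :
  (forall t, t \in s -> aff (F t)) -> s != [::] ->
  forall y0 e, 0 < e -> exists t, t \in s /\ exists y1 e1, 0 < e1 /\
    (forall y, inball y1 e1 y -> inball y0 e y) /\
    forall y, inball y1 e1 y -> forall t', t' \in s -> F t y <= F t' y.
Proof.
elim: s => [//|t0 s IH] haff _ y0 e e0.
case: s IH haff => [|t1 s] IH haff.
  exists t0; split; first by rewrite mem_head.
  exists y0, e; split=> //; split=> // y _ t'; rewrite inE => /eqP ->; exact: lexx.
have haff' : forall t, t \in t1 :: s -> aff (F t).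
  by move=> t ht; apply: haff; rewrite inE ht orbT.
have [t [ht [y1 [e1 [e10 [Hin Hmin]]]]]] := IH haff' isT y0 e e0.
have afft0 : aff (F t0) by apply: haff; rewrite mem_head.
have afft : aff (F t) by apply: haff; rewrite inE ht orbT.
have h2 : 0 < e1 / 2 by lra.
have hsub : forall y, inball y1 (e1 / 2) y -> inball y1 e1 y.
  by move=> y h i; have := h i; lra.
case: (classic (forall y, inball y1 (e1 / 2) y -> F t0 y <= F t y)) => H.
  exists t0; split; first by rewrite mem_head.
  exists y1, (e1 / 2); split=> //; split; first by move=> y /hsub /Hin.
  move=> y hy t'; rewrite inE => /orP [/eqP ->|ht']; first exact: lexx.
  by apply: le_trans (H _ hy) (Hmin _ (hsub _ hy) _ ht').
have [y2 Hy2] := not_all_ex_not _ _ H.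
have [hy2 hlt] := imply_to_and _ _ Hy2.
have hlt' : 0 < F t0 y2 - F t y2.
  case: (lerP (F t0 y2) (F t y2)) => h; first by case: hlt.
  lra.
have [e2 [e20 He2]] := aff_cont (aff_sub afft0 afft) hlt'.
exists t; split; first by rewrite inE ht orbT.
exists y2, (Order.min e2 (e1 / 2)); split; first by rewrite lt_min e20 h2.
have hin : forall y, inball y2 (Order.min e2 (e1 / 2)) y -> inball y1 e1 y.
  move=> y hy; apply: (inball_half hy2) => i; have := hy i; rewrite lt_min => /andP [].
  by [].
split; first by move=> y /hin /Hin.
move=> y hy t'; rewrite inE => /orP [/eqP ->|ht'].
  have hy' : inball y2 e2 y by move=> i; have := hy i; rewrite lt_min => /andP [].
  have := He2 y hy'; lra.
exact: Hmin _ (hin _ hy) _ ht'.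
Qed.

Definition facet_s (s : R) j (C f : pt R j.+1 -> Prop) : Prop :=
  exists (a : pt R j.+1) (b : R), 0 < s * a 0 ord_max /\
    (forall x, C x -> dotv a x <= b) /\
    (forall x, f x <-> (C x /\ dotv a x = b)) /\
    full_dim (im_proj f).

Lemma upper_facet_s j (C f : pt R j.+1 -> Prop) : upper_facet C f <-> facet_s 1 C f.
Proof.
split=> [[a [b [h1 h2]]]|[a [b [h1 h2]]]]; exists a, b; split=> //; move: h1; rewrite mul1r //.
Qed.

Lemma lower_facet_s j (C f : pt R j.+1 -> Prop) : lower_facet C f <-> facet_s (-1) C f.
Proof.
split=> [[a [b [h1 h2]]]|[a [b [h1 h2]]]]; exists a, b; split=> //; move: h1;
  rewrite mulN1r oppr_gt0 //.
Qed.

Lemma sig_mul (s p u v : R) : s * s = 1 -> p * (u - v) = (s * p) * (s * u - s * v).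
Proof. move=> sq; rewrite -[LHS]mul1r -sq; ring. Qed.

Lemma col_in (s : R) j (L : seq (hyp R j.+1)) y z z' : s * s = 1 ->
  polyh L (ext y z) -> s * z <= s * z' ->
  (forall m, m \in L -> 0 < s * hl m -> hval m (ext y z') <= 0) ->
  polyh L (ext y z').
Proof.
move=> sq hz hzz hup c hc.
case: (ltrP 0 (s * hl c)) => h; first exact: hup.
rewrite (hval_shift _ _ z) (sig_mul _ _ _ sq).
have := hz c hc; nra.
Qed.

Lemma im_proj_hyp j (C : pt R j.+1 -> Prop) (l : hyp R j.+1) y : hl l != 0 ->
  im_proj (fun x => C x /\ hval l x = 0) y <-> C (ext y (phi l y)).
Proof.
move=> hl0; split.
  move=> [x [[Cx hx] px]]; move: Cx hx; rewrite (ext_proj x) px hval_phi //.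
  move=> Cx /eqP; rewrite mulf_eq0 (negbTE hl0) /= subr_eq0 => /eqP <-; exact: Cx.
move=> Cy; exists (ext y (phi l y)); rewrite proj_ext hval_phi // subrr mulr0; by [].
Qed.

Lemma hval_phi_s (s : R) j (c : hyp R j.+1) y z : s * s = 1 -> hl c != 0 ->
  hval c (ext y z) = (s * hl c) * (s * z - s * phi c y).
Proof. by move=> sq h; rewrite hval_phi // (sig_mul _ _ _ sq). Qed.

Lemma facet_cons (s : R) j (L : seq (hyp R j.+1)) f : s * s = 1 ->
  facet_s s (polyh L) f ->
  exists l, l \in L /\ 0 < s * hl l /\ forall x, f x <-> (polyh L x /\ hval l x = 0).
Proof.
move=> sq [a [b [ha [hv [hf [y0 [e [e0 he]]]]]]]].
pose ab : hyp R j.+1 := (a, b).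
have hlab : hl ab != 0 by apply/eqP => h; move: ha; rewrite /hl /= in h; rewrite h mulr0 ltxx.
have hvab : forall x, polyh L x -> hval ab x <= 0.
  by move=> x /hv; rewrite /hval /= subr_le0.
have Hcol : forall y, inball y0 e y -> polyh L (ext y (phi ab y)).
  move=> y hy; have [x [fx px]] := he y hy.
  have [Cx hx] := (hf x).1 fx.
  have := (im_proj_hyp (polyh L) y hlab).1; apply.
  by exists x; split=> //; split=> //; rewrite /hval /= hx subrr.
pose Ls := filter (fun c => 0 < s * hl c) L.
have Lsn : Ls != [::].
  apply/eqP => Ls0.
  have hno : forall m, m \in L -> 0 < s * hl m -> False.
    move=> m hm hp; have : m \in Ls by rewrite mem_filter hp hm.
    by rewrite Ls0.
  have hC : polyh L (ext y0 (phi ab y0 + s)).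
    apply: (col_in sq (Hcol _ _)); first by move=> i; rewrite subrr normr0.
      by rewrite mulrDr lerDl; move: sq => ->; apply: ler01.
    by move=> m hm hp; case: (hno m hm hp).
  have E : s * (phi ab y0 + s) - s * phi ab y0 = 1.
    by rewrite mulrDr -sq; ring.
  have := hvab _ hC; rewrite (hval_phi_s _ _ sq hlab) E mulr1.
  rewrite /hl /=; lra.
have affF : forall c, c \in Ls -> aff (fun y => s * phi c y).
  by move=> c _; apply: aff_scale; apply: aff_phi.
have [l [hlLs [y1 [e1 [e10 [Hin Hmin]]]]]] := envelope affF Lsn y0 e0.
move: (hlLs); rewrite mem_filter => /andP [hlp hlL].
have hl0 : hl l != 0 by apply/eqP => h; move: hlp; rewrite h mulr0 ltxx.
have Heq : forall y, inball y1 e1 y -> phi l y - phi ab y = 0.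
  move=> y hy; have hy0 := Hin _ hy; have P0 := Hcol _ hy0.
  have i1 := P0 l hlL; rewrite (hval_phi_s _ _ sq hl0) in i1.
  have P1 : polyh L (ext y (phi l y)).
    apply: (col_in sq P0); first by nra.
    move=> m hm hmp; have hmLs : m \in Ls by rewrite mem_filter hmp hm.
    have hm0 : hl m != 0 by apply/eqP => h; move: hmp; rewrite h mulr0 ltxx.
    rewrite (hval_phi_s _ _ sq hm0); have := Hmin y hy m hmLs; nra.
  have := hvab _ P1; rewrite (hval_phi_s _ _ sq hlab) => i2.
  have ha' : 0 < s * hl ab by exact: ha.
  rewrite pmulr_rle0 // subr_le0 in i1; rewrite pmulr_rle0 // subr_le0 in i2.
  have : s * phi l y = s * phi ab y by apply: le_anti; rewrite i1 i2.
  move=> e'; have : s * (phi l y - phi ab y) = 0 by rewrite mulrBr e' subrr.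
  by move/eqP; rewrite mulf_eq0 => /orP [/eqP s0|/eqP //]; move: sq; rewrite s0 mulr0 => /eqP; rewrite eq_sym oner_eq0.
have Hall := aff_zero (aff_sub (aff_phi l) (aff_phi ab)) e10 Heq.
exists l; split=> //; split=> // x; rewrite hf.
have -> : (dotv a x = b) <-> (hval l x = 0).
  rewrite (ext_proj x).
  have : dotv a (ext (proj x) (x 0 ord_max)) - b = hval ab (ext (proj x) (x 0 ord_max)) by [].
  rewrite !hval_phi // => hab.
  have /eqP := Hall (proj x); rewrite subr_eq0 => /eqP ->.
  split=> h.
    have : hl ab * (x 0 ord_max - phi ab (proj x)) = 0 by rewrite -hab h subrr.
    by move/eqP; rewrite mulf_eq0 (negbTE hlab) /= => /eqP ->; rewrite mulr0.
  by move/eqP: h; rewrite mulf_eq0 (negbTE hl0) /= => /eqP h; apply/eqP; rewrite -subr_eq0 hab h mulr0.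
by [].
Qed.

Lemma hval0 k (c : hyp R k) x : hval c x = 0 <-> dotv c.1 x = c.2.
Proof. by rewrite /hval; split=> [/eqP|->]; [rewrite subr_eq0 => /eqP|rewrite subrr]. Qed.

Lemma noup_cons (s : R) j (L : seq (hyp R j.+1)) y0 e : s * s = 1 -> 0 < e ->
  (forall y, inball y0 e y -> exists z, polyh L (ext y z)) ->
  ~ (exists f, facet_s s (polyh L) f) -> forall c, c \in L -> s * hl c <= 0.
Proof.
move=> sq e0 hz hno c hc; case: (lerP (s * hl c) 0) => // hcp; exfalso.
pose Ls := filter (fun c => 0 < s * hl c) L.
have Lsn : Ls != [::].
  apply/eqP => Ls0; have : c \in Ls by rewrite mem_filter hcp hc.
  by rewrite Ls0.
have affF : forall c, c \in Ls -> aff (fun y => s * phi c y).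
  by move=> c' _; apply: aff_scale; apply: aff_phi.
have [l [hlLs [y1 [e1 [e10 [Hin Hmin]]]]]] := envelope affF Lsn y0 e0.
move: (hlLs); rewrite mem_filter => /andP [hlp hlL].
have hl0 : hl l != 0 by apply/eqP => h; move: hlp; rewrite h mulr0 ltxx.
apply: hno; exists (fun x => polyh L x /\ hval l x = 0).
exists l.1, l.2; split=> //; split; first by move=> x /(_ l hlL); rewrite /hval subr_le0.
split; first by move=> x; rewrite hval0.
exists y1, e1; split=> // y hy; apply/(im_proj_hyp _ _ hl0).
have [z Pz] := hz y (Hin _ hy).
have i1 := Pz l hlL; rewrite (hval_phi_s _ _ sq hl0) pmulr_rle0 // subr_le0 in i1.
apply: (col_in sq Pz) => // m hm hmp.
have hmLs : m \in Ls by rewrite mem_filter hmp hm.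
have hm0 : hl m != 0 by apply/eqP => h; move: hmp; rewrite h mulr0 ltxx.
rewrite (hval_phi_s _ _ sq hm0) pmulr_rle0 // subr_le0; exact: Hmin y hy m hmLs.
Qed.

Lemma noup_none (s : R) j (L : seq (hyp R j.+1)) : s * s = 1 ->
  (forall c, c \in L -> s * hl c <= 0) -> ~ (exists f, facet_s s (polyh L) f).
Proof.
move=> sq hL [f [a [b [ha [hv [hf [y0 [e [e0 he]]]]]]]]].
have hb : inball y0 e y0 by move=> i; rewrite subrr normr0.
have [x [fx px]] := he y0 hb.
have [Cx ax] := (hf x).1 fx.
have Cx' : polyh L (ext (proj x) (x 0 ord_max + s)).
  apply: (col_in (z:=x 0 ord_max) sq); first by rewrite -ext_proj.
    rewrite mulrDr sq; lra.
  by move=> m hm hmp; have := hL m hm; lra.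
have := hv _ Cx'; rewrite dotv_ext.
have := ax; rewrite {1}(ext_proj x) dotv_ext => ax'.
rewrite mulrDr -ax'; nra.
Qed.

Lemma polyh_cat k (A B : seq (hyp R k)) y : polyh (A ++ B) y <-> polyh A y /\ polyh B y.
Proof.
split=> [H|[HA HB]]; first by split=> c hc; apply: H; rewrite mem_cat hc ?orbT.
by move=> c; rewrite mem_cat => /orP [] ?; [apply: HA|apply: HB].
Qed.

Lemma polyh_sub k (A B : seq (hyp R k)) y : {subset A <= B} -> polyh B y -> polyh A y.
Proof. by move=> hs H c hc; apply: H; apply: hs. Qed.

Lemma full_dim_mono k (S S' : pt R k -> Prop) : (forall y, S y -> S' y) ->
  full_dim S -> full_dim S'.
Proof. by move=> h [y [e [e0 H]]]; exists y, e; split=> // z /H /h. Qed.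

Lemma full_dim_ne k (S : pt R k -> Prop) : full_dim S -> exists y, S y.
Proof. by move=> [y [e [e0 H]]]; exists y; apply: H => i; rewrite subrr normr0. Qed.

Lemma vd1_sub j (C s : pt R j.+1 -> Prop) : vd1 C s -> forall x, s x -> C x.
Proof.
elim: j C s => [|j IH] C s /=; first by move=> H x /H.
by move=> [P [tau [_ [_ [_ H]]]]] x /H [].
Qed.

Lemma set_ext k (P Q : pt R k -> Prop) : (forall y, P y <-> Q y) -> P = Q.
Proof. by move=> h; apply: functional_extensionality => y; apply: propositional_extensionality. Qed.

Lemma mk_facet (s : R) j (L : seq (hyp R j.+1)) l : l \in L -> 0 < s * hl l ->
  full_dim (im_proj (fun x => polyh L x /\ hval l x = 0)) ->
  facet_s s (polyh L) (fun x => polyh L x /\ hval l x = 0).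
Proof.
move=> hlL hp hfd; exists l.1, l.2; split=> //; split.
  by move=> x /(_ l hlL); rewrite /hval subr_le0.
split=> // x; rewrite hval0; by [].
Qed.

Lemma col_between j (L : seq (hyp R j.+1)) y z1 z2 z :
  polyh L (ext y z1) -> polyh L (ext y z2) -> z1 <= z -> z <= z2 -> polyh L (ext y z).
Proof.
move=> h1 h2 a b c hc; have u := h1 c hc; have v := h2 c hc.
rewrite (hval_shift _ _ z1) in v *; rewrite (hval_shift _ _ z1).
case: (lerP 0 (hl c)) => hs; nra.
Qed.

Definition dropc j (c : hyp R j.+1) : hyp R j := (proj c.1, c.2).

Lemma hval_drop j (c : hyp R j.+1) x : hl c = 0 -> hval c x = hval (dropc c) (proj x).
Proof. by move=> h; rewrite /hval dotv_split /hl in h *; rewrite h mul0r addr0. Qed.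

Lemma preimage2 (A B : eqType) (f g : A -> B) (L : seq A) (W : seq B) :
  {subset W <= map f L ++ map g L} -> exists W0, {subset W0 <= L} /\
    (size W0 <= size W)%N /\ {subset W <= map f W0 ++ map g W0}.
Proof.
elim: W => [|w W IH] hs; first by exists [::].
have [W0 [h1 [h2 h3]]] : exists W0, {subset W0 <= L} /\
    (size W0 <= size W)%N /\ {subset W <= map f W0 ++ map g W0}.
  by apply: IH => x hx; apply: hs; rewrite inE hx orbT.
have : w \in map f L ++ map g L by apply: hs; rewrite mem_head.
rewrite mem_cat => /orP [] /mapP [a ha ->].
  exists (a :: W0); split; first by move=> x; rewrite inE => /orP [/eqP ->|/h1].
  split=> //; move=> x; rewrite inE => /orP [/eqP ->|/h3]; first by rewrite /= inE eqxx.
  by rewrite !mem_cat /= !inE => /orP [->|->]; rewrite ?orbT.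
exists (a :: W0); split; first by move=> x; rewrite inE => /orP [/eqP ->|/h1].
split=> //; move=> x; rewrite inE => /orP [/eqP ->|/h3].
  by rewrite mem_cat /= !inE eqxx !orbT.
by rewrite !mem_cat /= !inE => /orP [->|->]; rewrite ?orbT.
Qed.

Lemma map_cat_sub (A B : eqType) (f g : A -> B) (L L' : seq A) :
  {subset L <= L'} -> {subset map f L ++ map g L <= map f L' ++ map g L'}.
Proof.
move=> hs x; rewrite !mem_cat => /orP [] /mapP [a ha ->].
  by rewrite map_f ?hs.
by rewrite map_f ?hs ?orbT.
Qed.

Lemma pt0_eq (u v : pt R 0) : u = v.
Proof. by apply/rowP => -[]. Qed.


Lemma sq1 : (1 : R) * 1 = 1. Proof. by rewrite mulr1. Qed.
Lemma sqN1 : (-1 : R) * (-1) = 1. Proof. by rewrite mulrNN mulr1. Qed.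

Lemma hl_ne0 (s : R) j (l : hyp R j.+1) : 0 < s * hl l -> hl l != 0.
Proof. by move=> h; apply/eqP => e; move: h; rewrite e mulr0 ltxx. Qed.

Lemma pick_env (s : R) (L : seq (hyp R 1)) (y : pt R 0) : s * s = 1 ->
  exists W, {subset W <= L} /\ (size W <= 1)%N /\
  forall L', {subset W <= L'} -> forall z, polyh L' (ext y z) ->
  forall c, c \in L -> 0 < s * hl c -> hval c (ext y z) <= 0.
Proof.
move=> sq.
pose Ls := filter (fun c => 0 < s * hl c) L.
case: (eqVneq Ls [::]) => Lsn.
  exists [::]; split=> //; split=> // L' _ z _ c hc hcp.
  have : c \in Ls by rewrite mem_filter hcp hc.
  by rewrite Lsn.
have affF : forall c, c \in Ls -> aff (fun y => s * phi c y).
  by move=> c' _; apply: aff_scale; apply: aff_phi.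
have [l [hlLs [y1 [e1 [e10 [Hin Hmin]]]]]] := envelope affF Lsn y (@ltr01 R).
move: (hlLs); rewrite mem_filter => /andP [hlp hlL].
exists [:: l]; split; first by move=> x; rewrite inE => /eqP ->.
split=> // L' hW z Pz c hc hcp.
have i1 := Pz l (hW l (mem_head _ _)).
rewrite (hval_phi_s _ _ sq (hl_ne0 hlp)) pmulr_rle0 // subr_le0 in i1.
rewrite (hval_phi_s _ _ sq (hl_ne0 hcp)) pmulr_rle0 // subr_le0.
have hy : inball y1 e1 y by move=> [].
have := Hmin y hy c; rewrite mem_filter hcp hc => /(_ isT); lra.
Qed.

Lemma im_drop j (L0 : seq (hyp R j.+1)) y : (forall c, c \in L0 -> hl c = 0) ->
  im_proj (polyh L0) y <-> polyh (map (@dropc j) L0) y.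
Proof.
move=> h0; split.
  move=> [x [Px px]] c /mapP [c0 hc0 ->]; rewrite -px -hval_drop ?h0 //; exact: Px hc0.
move=> H; exists (ext y 0); split; last by rewrite proj_ext.
by move=> c hc; rewrite hval_drop ?h0 // proj_ext; apply: H; apply: map_f.
Qed.

Lemma main_lemma j : forall (L : seq (hyp R j.+1)) tau,
  (exists x, polyh L x) -> vd1 (polyh L) tau ->
  exists W, {subset W <= L} /\ (size W <= 2 * j.+1)%N /\
    forall L', {subset W <= L'} -> {subset L' <= L} -> vd1 (polyh L') tau.
Proof.
elim: j => [|j IH] L tau [x1 Px1].
  move=> /= Htau.
  have [W1 [s1 [z1 H1]]] := pick_env L (proj x1) sq1.
  have [W2 [s2 [z2 H2]]] := pick_env L (proj x1) sqN1.
  exists (W1 ++ W2); split.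
    by move=> x; rewrite mem_cat => /orP [/s1|/s2].
  split; first by rewrite size_cat; apply: leq_trans (leq_add z1 z2) _.
  move=> L' hW hL' x; rewrite Htau; split; first exact: polyh_sub.
  move=> PL' c hc.
  have ex : x = ext (proj x1) (x 0 ord_max) by rewrite (pt0_eq (proj x1) (proj x)) -ext_proj.
  rewrite ex in PL' *.
  case: (ltrgtP (hl c) 0) => hcs.
  - apply: (H2 L') => //; first by move=> w hw; apply: hW; rewrite mem_cat hw orbT.
    by rewrite mulN1r oppr_gt0.
  - apply: (H1 L') => //; first by move=> w hw; apply: hW; rewrite mem_cat hw.
    by rewrite mul1r.
  - rewrite (hval_shift _ _ (x1 0 ord_max)) hcs mul0r addr0 -ext_proj; exact: Px1.
move=> /= [P [tau' [HSB [HfdP [Hvd Hs]]]]].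
have Hne := full_dim_ne HfdP.
case: HSB => [[fu [fl [Hu [Hl HP]]]]|[[Hnu [fl [Hl HP]]]|[[Hnl [fu [Hu HP]]]|[Hnu [Hnl HP]]]]].
-
  have [lp [lpL [lpp Hfu]]] := facet_cons sq1 ((upper_facet_s _ _).1 Hu).
  have [lm [lmL [lmp Hfl]]] := facet_cons sqN1 ((lower_facet_s _ _).1 Hl).
  have lp0 := hl_ne0 lpp; have lm0 := hl_ne0 lmp.
  have Efu := set_ext Hfu; have Efl := set_ext Hfl.
  have [_ [_ [_ [_ [_ fdu]]]]] := Hu; have [_ [_ [_ [_ [_ fdl]]]]] := Hl.
  rewrite Efu in fdu; rewrite Efl in fdl.
  pose LP (L0 : seq (hyp R j.+2)) := map (comp lp) L0 ++ map (comp lm) L0.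
  have HPL : forall L0 y, polyh (LP L0) y <->
      (im_proj (fun x => polyh L0 x /\ hval lp x = 0) y /\
       im_proj (fun x => polyh L0 x /\ hval lm x = 0) y).
    move=> L0 y; split.
      move/polyh_cat => [/(polyh_comp _ _ lp0) h1 /(polyh_comp _ _ lm0) h2].
      by split; apply/im_proj_hyp.
    move=> [/(im_proj_hyp _ _ lp0) h1 /(im_proj_hyp _ _ lm0) h2].
    by apply/polyh_cat; split; apply/polyh_comp.
  have HPe : P = polyh (LP L).
    by apply: set_ext => y; rewrite HP Efu Efl; split => /HPL.
  rewrite HPe in Hvd HfdP Hne.
  have [WP [hWP [szWP HWP]]] := IH _ _ Hne Hvd.
  have [W0 [h0 [sz0 h0']]] := preimage2 hWP.
  exists [:: lp, lm & W0]; split.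
    by move=> x; rewrite !inE => /or3P [/eqP->|/eqP->|/h0].
  split; first by have := leq_trans sz0 szWP; rewrite /= !mulnS; lia.
  move=> L' hW hL'.
  have lpL' : lp \in L' by apply: hW; rewrite mem_head.
  have lmL' : lm \in L' by apply: hW; rewrite !inE eqxx orbT.
  have W0L' : {subset W0 <= L'} by move=> x hx; apply: hW; rewrite !inE hx !orbT.
  exists (polyh (LP L')), tau'; split.
    left; exists (fun x => polyh L' x /\ hval lp x = 0), (fun x => polyh L' x /\ hval lm x = 0).
    split.
      apply/upper_facet_s; apply: mk_facet => //; apply: full_dim_mono fdu.
      by move=> y [x [[h1 h2] h3]]; exists x; split=> //; split=> //; apply: polyh_sub h1.
    split.
      apply/lower_facet_s; apply: mk_facet => //; apply: full_dim_mono fdl.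
      by move=> y [x [[h1 h2] h3]]; exists x; split=> //; split=> //; apply: polyh_sub h1.
    by move=> y; apply: HPL.
  split.
    by apply: full_dim_mono HfdP => y; apply: polyh_sub; apply: map_cat_sub.
  split.
    apply: HWP; last by apply: map_cat_sub.
    by move=> w /h0'; apply: map_cat_sub.
  move=> x; split.
    by move/Hs => [h1 h2]; split=> //; apply: polyh_sub h1.
  move=> [PL'x tx]; apply/Hs; split=> //.
  have := vd1_sub Hvd tx => /HPL [/(im_proj_hyp _ _ lp0) A /(im_proj_hyp _ _ lm0) B].
  have i1 := PL'x lp lpL'; have i2 := PL'x lm lmL'.
  rewrite (ext_proj x) hval_phi // in i1; rewrite (ext_proj x) hval_phi // in i2.
  rewrite (ext_proj x); apply: (col_between B A).
    move: lmp; rewrite mulN1r oppr_gt0 => lmp; nra.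
  move: lpp; rewrite mul1r => lpp; nra.
-
  have [lm [lmL [lmp Hfl]]] := facet_cons sqN1 ((lower_facet_s _ _).1 Hl).
  have lm0 := hl_ne0 lmp.
  have Efl := set_ext Hfl.
  have [_ [_ [_ [_ [_ fdl]]]]] := Hl.
  rewrite Efl in fdl.
  have [y0 [e [e0 he]]] := fdl.
  have hz : forall y, inball y0 e y -> exists z, polyh L (ext y z).
    move=> y /he [x [[Px _] px]]; exists (x 0 ord_max); by rewrite -px -ext_proj.
  have hnu' : ~ exists f, facet_s 1 (polyh L) f.
    by move=> [f hf]; apply: Hnu; exists f; apply/upper_facet_s.
  have Hup := noup_cons sq1 e0 hz hnu'.
  pose LP (L0 : seq (hyp R j.+2)) := map (comp lm) L0.
  have HPL : forall L0 y, polyh (LP L0) y <->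
      im_proj (fun x => polyh L0 x /\ hval lm x = 0) y.
    move=> L0 y; split.
      by move/(polyh_comp _ _ lm0) => h2; apply/im_proj_hyp.
    by move/(im_proj_hyp _ _ lm0) => h2; apply/polyh_comp.
  have HPe : P = polyh (LP L).
    by apply: set_ext => y; rewrite HP Efl; split => /HPL.
  rewrite HPe in Hvd HfdP Hne.
  have [WP [hWP [szWP HWP]]] := IH _ _ Hne Hvd.
  have hWP2 : {subset WP <= LP L ++ LP L} by move=> w /hWP hw; rewrite mem_cat hw.
  have [W0 [h0 [sz0 h0']]] := preimage2 hWP2.
  exists (lm :: W0); split.
    by move=> x; rewrite !inE => /orP [/eqP->|/h0].
  split; first by have := leq_trans sz0 szWP; rewrite /= !mulnS; lia.
  move=> L' hW hL'.
  have lmL' : lm \in L' by apply: hW; rewrite mem_head.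
  have W0L' : {subset W0 <= L'} by move=> x hx; apply: hW; rewrite !inE hx !orbT.
  exists (polyh (LP L')), tau'; split.
    right; left; split.
      move=> [f hf]; apply: (noup_none sq1 _ (ex_intro _ f ((upper_facet_s _ _).1 hf))).
      by move=> c hc; apply: Hup; apply: hL'.
    exists (fun x => polyh L' x /\ hval lm x = 0); split.
      apply/lower_facet_s; apply: mk_facet => //; apply: full_dim_mono fdl.
      by move=> y [x [[h1 h2] h3]]; exists x; split=> //; split=> //; apply: polyh_sub h1.
    by move=> y; apply: HPL.
  split.
    apply: full_dim_mono HfdP => y; apply: polyh_sub => w; rewrite /LP => /mapP [c hc ->].
    by rewrite map_f ?hL'.
  split.
    apply: HWP; last by move=> w; rewrite /LP => /mapP [c hc ->]; rewrite map_f ?hL'.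
    move=> w /h0'; rewrite mem_cat orbb /LP => /mapP [c hc ->]; by rewrite map_f ?W0L'.
  move=> x; split.
    by move/Hs => [h1 h2]; split=> //; apply: polyh_sub h1.
  move=> [PL'x tx]; apply/Hs; split=> //.
  have := vd1_sub Hvd tx => /HPL /(im_proj_hyp _ _ lm0) B.
  have i2 := PL'x lm lmL'.
  rewrite (ext_proj x) hval_phi // in i2.
  rewrite (ext_proj x); apply: (col_in sq1 B).
    move: lmp; rewrite mulN1r oppr_gt0 => lmp; rewrite !mul1r; nra.
  by move=> m hm hmp; have := Hup m hm; lra.
-
  have [lm [lmL [lmp Hfu]]] := facet_cons sq1 ((upper_facet_s _ _).1 Hu).
  have lm0 := hl_ne0 lmp.
  have Efu := set_ext Hfu.
  have [_ [_ [_ [_ [_ fdu]]]]] := Hu.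
  rewrite Efu in fdu.
  have [y0 [e [e0 he]]] := fdu.
  have hz : forall y, inball y0 e y -> exists z, polyh L (ext y z).
    move=> y /he [x [[Px _] px]]; exists (x 0 ord_max); by rewrite -px -ext_proj.
  have hnu' : ~ exists f, facet_s (-1) (polyh L) f.
    by move=> [f hf]; apply: Hnl; exists f; apply/lower_facet_s.
  have Hup := noup_cons sqN1 e0 hz hnu'.
  pose LP (L0 : seq (hyp R j.+2)) := map (comp lm) L0.
  have HPL : forall L0 y, polyh (LP L0) y <->
      im_proj (fun x => polyh L0 x /\ hval lm x = 0) y.
    move=> L0 y; split.
      by move/(polyh_comp _ _ lm0) => h2; apply/im_proj_hyp.
    by move/(im_proj_hyp _ _ lm0) => h2; apply/polyh_comp.
  have HPe : P = polyh (LP L).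
    by apply: set_ext => y; rewrite HP Efu; split => /HPL.
  rewrite HPe in Hvd HfdP Hne.
  have [WP [hWP [szWP HWP]]] := IH _ _ Hne Hvd.
  have hWP2 : {subset WP <= LP L ++ LP L} by move=> w /hWP hw; rewrite mem_cat hw.
  have [W0 [h0 [sz0 h0']]] := preimage2 hWP2.
  exists (lm :: W0); split.
    by move=> x; rewrite !inE => /orP [/eqP->|/h0].
  split; first by have := leq_trans sz0 szWP; rewrite /= !mulnS; lia.
  move=> L' hW hL'.
  have lmL' : lm \in L' by apply: hW; rewrite mem_head.
  have W0L' : {subset W0 <= L'} by move=> x hx; apply: hW; rewrite !inE hx !orbT.
  exists (polyh (LP L')), tau'; split.
    right; right; left; split.
      move=> [f hf]; apply: (noup_none sqN1 _ (ex_intro _ f ((lower_facet_s _ _).1 hf))).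
      by move=> c hc; apply: Hup; apply: hL'.
    exists (fun x => polyh L' x /\ hval lm x = 0); split.
      apply/upper_facet_s; apply: mk_facet => //; apply: full_dim_mono fdu.
      by move=> y [x [[h1 h2] h3]]; exists x; split=> //; split=> //; apply: polyh_sub h1.
    by move=> y; apply: HPL.
  split.
    apply: full_dim_mono HfdP => y; apply: polyh_sub => w; rewrite /LP => /mapP [c hc ->].
    by rewrite map_f ?hL'.
  split.
    apply: HWP; last by move=> w; rewrite /LP => /mapP [c hc ->]; rewrite map_f ?hL'.
    move=> w /h0'; rewrite mem_cat orbb /LP => /mapP [c hc ->]; by rewrite map_f ?W0L'.
  move=> x; split.
    by move/Hs => [h1 h2]; split=> //; apply: polyh_sub h1.
  move=> [PL'x tx]; apply/Hs; split=> //.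
  have := vd1_sub Hvd tx => /HPL /(im_proj_hyp _ _ lm0) B.
  have i2 := PL'x lm lmL'.
  rewrite (ext_proj x) hval_phi // in i2.
  rewrite (ext_proj x); apply: (col_in sqN1 B).
    move: lmp; rewrite mul1r => lmp; rewrite !mulN1r lerN2; nra.
  by move=> m hm hmp; have := Hup m hm; lra.
-
  have [y0 [e [e0 he]]] := HfdP.
  have hz : forall y, inball y0 e y -> exists z, polyh L (ext y z).
    move=> y /he /HP [x [Px px]]; exists (x 0 ord_max); by rewrite -px -ext_proj.
  have hnu' : ~ exists f, facet_s 1 (polyh L) f.
    by move=> [f hf]; apply: Hnu; exists f; apply/upper_facet_s.
  have hnl' : ~ exists f, facet_s (-1) (polyh L) f.
    by move=> [f hf]; apply: Hnl; exists f; apply/lower_facet_s.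
  have Hup := noup_cons sq1 e0 hz hnu'.
  have Hlo := noup_cons sqN1 e0 hz hnl'.
  have H0 : forall c, c \in L -> hl c = 0.
    move=> c hc; have := Hup c hc; have := Hlo c hc; rewrite mul1r mulN1r oppr_le0 => a b.
    by apply: le_anti; rewrite a b.
  pose LP (L0 : seq (hyp R j.+2)) := map (@dropc j.+1) L0.
  have HPe : P = polyh (LP L).
    by apply: set_ext => y; rewrite HP; apply: im_drop.
  rewrite HPe in Hvd HfdP Hne.
  have [WP [hWP [szWP HWP]]] := IH _ _ Hne Hvd.
  have hWP2 : {subset WP <= LP L ++ LP L} by move=> w /hWP hw; rewrite mem_cat hw.
  have [W0 [h0 [sz0 h0']]] := preimage2 hWP2.
  exists W0; split => //.
  split; first by have := leq_trans sz0 szWP; rewrite /= !mulnS; lia.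
  move=> L' hW hL'.
  have H0' : forall c, c \in L' -> hl c = 0 by move=> c /hL'; apply: H0.
  exists (polyh (LP L')), tau'; split.
    right; right; right; split.
      move=> [f hf]; apply: (noup_none sq1 _ (ex_intro _ f ((upper_facet_s _ _).1 hf))).
      by move=> c /H0' ->; rewrite mulr0.
    split.
      move=> [f hf]; apply: (noup_none sqN1 _ (ex_intro _ f ((lower_facet_s _ _).1 hf))).
      by move=> c /H0' ->; rewrite mulr0.
    by move=> y; rewrite im_drop.
  split.
    apply: full_dim_mono HfdP => y; apply: polyh_sub => w; rewrite /LP => /mapP [c hc ->].
    by rewrite map_f ?hL'.
  split.
    apply: HWP; last by move=> w; rewrite /LP => /mapP [c hc ->]; rewrite map_f ?hL'.
    move=> w /h0'; rewrite mem_cat orbb /LP => /mapP [c hc ->]; by rewrite map_f ?hW.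
  move=> x; split.
    by move/Hs => [h1 h2]; split=> //; apply: polyh_sub h1.
  move=> [PL'x tx]; apply/Hs; split=> //.
  have B := vd1_sub Hvd tx.
  move=> c hc; rewrite hval_drop ?H0 //; apply: B; exact: map_f.
Qed.


Lemma dotv_mulmx k d (a : pt R d) (u : pt R k) (M : 'M[R]_(k, d)) :
  dotv a (u *m M) = dotv (a *m M^T) u.
Proof.
rewrite /dotv; under eq_bigr do rewrite mxE big_distrr.
rewrite exchange_big; apply: eq_bigr => l _; rewrite mxE big_distrl.
by apply: eq_bigr => i _; rewrite !mxE /=; ring.
Qed.

Section Frame.
Variables (d k : nat) (o : pt R d) (M : 'M[R]_(k, d)) (x0 : pt R d).

Definition sgn (h : hyp R d) : R := if hval h x0 < 0 then 1 else -1.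
Definition consf (h : hyp R d) : hyp R k :=
  (sgn h *: (h.1 *m M^T), sgn h * (h.2 - dotv h.1 o)).

Lemma hval_consf h u : hval (consf h) u = sgn h * hval h (frame_pt o M u).
Proof.
rewrite /hval /consf /frame_pt /= dotvZl dotvDr dotv_mulmx; ring.
Qed.

Definition nzh (h : hyp R d) := hval h x0 != 0.

Lemma cell_polyh (G : seq (hyp R d)) u :
  (forall h, h \in G -> hval h x0 = 0 -> hval h (frame_pt o M u) = 0) ->
  closed_cell G x0 (frame_pt o M u) <-> polyh (map consf (filter nzh G)) u.
Proof.
move=> Hs; split.
  move=> Hc c /mapP [h]; rewrite mem_filter => /andP [nz hG] ->.
  rewrite hval_consf /sgn; have [h1 [h2 h3]] := Hc h hG.
  case: ltrP => hx.
    by rewrite mul1r; apply: h3.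
  have hx' : 0 < hval h x0 by rewrite lt_neqAle eq_sym hx andbT; exact: nz.
  by rewrite mulN1r oppr_le0; apply: h2.
move=> Hp h hG; split; first exact: Hs.
case: (eqVneq (hval h x0) 0) => [->|nz]; first by split=> ?; lra.
have hin : consf h \in map consf (filter nzh G) by apply: map_f; rewrite mem_filter hG andbT; exact: nz.
have := Hp _ hin.
rewrite hval_consf /sgn; case: ltrP => hx.
  by rewrite mul1r => ?; split=> // ?; lra.
by rewrite mulN1r oppr_le0 => ?; split=> // ?; lra.
Qed.

End Frame.

Lemma core d (H : seq (hyp R d)) k (o : pt R d) (M : 'M[R]_(k, d)) x0 tau :
  (forall x, supp_flat H x0 x <-> exists u, x = frame_pt o M u) ->
  vd (fun u => closed_cell H x0 (frame_pt o M u)) tau ->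
  exists D1, {subset D1 <= H} /\ (size D1 <= 2 * k)%N /\
    (forall h, h \in D1 -> hval h x0 != 0) /\
    vd (fun u => closed_cell D1 x0 (frame_pt o M u)) tau.
Proof.
move=> Hfl Hvd.
have Hs : forall h, h \in H -> hval h x0 = 0 -> forall u, hval h (frame_pt o M u) = 0.
  move=> h hH hz u; have := (Hfl (frame_pt o M u)).2 (ex_intro _ u erefl).
  by move/(_ h hH hz).
have [u0 eu0] := (Hfl x0).1 (fun h _ e => e).
case: k M tau Hfl Hvd Hs u0 eu0 => [|j] M tau Hfl Hvd Hs u0 eu0.
  exists [::]; split=> //; split=> //; split=> // u; rewrite /= in Hvd *.
  rewrite Hvd (pt0_eq u u0) -eu0; split=> // _ h hh.
  by split=> //; split=> ?; lra.
pose L := map (consf o M x0) (filter (nzh x0) H).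
have EC : (fun u => closed_cell H x0 (frame_pt o M u)) = polyh L.
  by apply: set_ext => u; apply: cell_polyh => h hh hz; apply: Hs.
rewrite /= EC in Hvd.
have Lne : exists u, polyh L u.
  by exists u0; rewrite -EC -eu0 => h _; split=> //; split=> ?; lra.
have [W [hWL [szW HW]]] := main_lemma Lne Hvd.
have hW2 : {subset W <= L ++ L} by move=> w hw; rewrite mem_cat hWL.
have [W0 [h0 [sz0 h0']]] := preimage2 hW2.
exists W0; split; first by move=> h /h0; rewrite mem_filter => /andP [].
split; first by apply: leq_trans sz0 szW.
have nzW0 : forall h, h \in W0 -> hval h x0 != 0.
  by move=> h /h0; rewrite mem_filter => /andP [].
split=> //.
have EC' : (fun u => closed_cell W0 x0 (frame_pt o M u)) =
    polyh (map (consf o M x0) (filter (nzh x0) W0)).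
  apply: set_ext => u; apply: cell_polyh => h hh hz; apply: Hs => //.
  by have := h0 _ hh; rewrite mem_filter => /andP [].
rewrite /= EC'; apply: HW.
  move=> w /h0'; rewrite mem_cat orbb => /mapP [h hh ->]; apply: map_f.
  by rewrite mem_filter hh andbT; exact: nzW0.
move=> w /mapP [h]; rewrite mem_filter => /andP [_ hh ->]; apply: map_f; exact: h0.
Qed.


Lemma flat_select d (H : seq (hyp R d)) k (o : pt R d) (M : 'M[R]_(k, d)) x0 :
  row_free M ->
  (forall x, supp_flat H x0 x <-> exists u, x = frame_pt o M u) ->
  exists D2, {subset D2 <= H} /\ (size D2 <= d - k)%N /\
    (forall h, h \in D2 -> hval h x0 = 0) /\
    forall x, (forall h, h \in D2 -> hval h x = 0) -> supp_flat H x0 x.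
Proof.
move=> rfM Hfl.
pose Z := filter (fun h => hval h x0 == 0) H.
pose n := size Z.
pose N : 'M[R]_(n, d) := \matrix_(i < n, l < d) (nth (0, 0) Z i).1 0 l.
have inZ : forall h, h \in Z -> h \in H /\ hval h x0 = 0.
  by move=> h; rewrite mem_filter => /andP [/eqP -> ->].
have Hs : forall h, h \in Z -> forall u, hval h (frame_pt o M u) = 0.
  move=> h /inZ [hH hz] u; have := (Hfl (frame_pt o M u)).2 (ex_intro _ u erefl).
  by move/(_ h hH hz).
have entry : forall (v : pt R d) (r : 'I_n), (v *m N^T) 0 r = dotv (nth (0, 0) Z r).1 v.
  move=> v r; rewrite mxE /dotv; apply: eq_bigr => l _; rewrite !mxE mulrC.
  by [].
have MN : M *m N^T = 0.
  apply/matrixP => i r; rewrite !mxE.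
  have hZ : nth (0, 0) Z r \in Z by apply: mem_nth.
  have e1 := Hs _ hZ 0; have e2 := Hs _ hZ (delta_mx 0 i).
  rewrite /frame_pt mul0mx addr0 -rowE in e1 e2.
  move: e1 e2; rewrite /hval dotvDr => e1 e2.
  have : dotv (nth (0, 0) Z r).1 (row i M) = 0 by lra.
  move=> h0; rewrite -[X in _ = X]h0 /dotv; apply: eq_bigr => l _; rewrite !mxE mulrC //.
have rk : (\rank N <= d - k)%N.
  have := mulmx0_rank_max MN; rewrite mxrank_tr.
  move: rfM; rewrite /row_free => /eqP ->; lia.
pose f := maxrankfun N.
have sN : (N <= rowsub f N)%MS by rewrite (eq_maxrowsub N) submx_refl.
have [X eX] := submxP sN.
pose D2 := [seq nth (0, 0) Z (f i) | i <- enum 'I_(\rank N)].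
have D2Z : {subset D2 <= Z}.
  by move=> h /mapP [i _ ->]; apply: mem_nth.
exists D2; split; first by move=> h /D2Z /inZ [].
split; first by rewrite size_map size_enum_ord.
split; first by move=> h /D2Z /inZ [].
move=> x Hx h hH hz.
have hZ : h \in Z by rewrite mem_filter hz eqxx.
pose v := x - x0.
have V0 : v *m (rowsub f N)^T = 0.
  apply/matrixP => i r; rewrite !mxE.
  have hD : nth (0, 0) Z (f r) \in D2 by apply/mapP; exists r; rewrite ?mem_enum.
  have [_ hz'] := inZ _ (D2Z _ hD).
  have := Hx _ hD; move: hz'; rewrite /hval => a b.
  have : dotv (nth (0, 0) Z (f r)).1 v = 0 by rewrite /v dotvBr; lra.
  move=> h0; rewrite -[X in _ = X]h0 /dotv; apply: eq_bigr => l _; rewrite !mxE mulrC.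
  by rewrite (ord1 i).
have VN : v *m N^T = 0 by rewrite eX trmx_mul mulmxA V0 mul0mx.
have ri : (index h Z < n)%N by rewrite index_mem.
have := entry v (Ordinal ri); rewrite VN mxE /= nth_index // => e.
move: hz; rewrite /hval /v dotvBr in e *; lra.
Qed.

End Aux.


Unset Implicit Arguments.
Set Strict Implicit.

Theorem mainTheorem11 (R : realFieldType) (d : nat) (H : seq (hyp R d))
    (Hnz : forall h, h \in H -> h.1 != 0)
    (Hgp : gen_pos H) :
  (* prisms of full-dimensional cells (standard coordinates) *)
  (forall s : pt R d -> Prop,
     prism_via H 0 (1%:M : 'M[R]_d) s ->
     exists D : seq (hyp R d),
       {subset D <= H} /\ (size D <= 2 * d)%N /\
       prism_via D 0 (1%:M : 'M[R]_d) s) /\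
  (* prisms of lower-dimensional cells (generic frame in the supporting flat) *)
  (forall (k : nat) (o : pt R d) (M : 'M[R]_(k, d)),
     (k < d)%N -> generic_frame H o M ->
     forall s : pt R d -> Prop,
       prism_via H o M s ->
       exists D : seq (hyp R d),
         {subset D <= H} /\ (size D <= 2 * d)%N /\ prism_via D o M s).
Proof.
split.
  move=> s [x0 [Hfl [tau [Hvd Hs]]]].
  have [D1 [hD [sz [nz Hvd']]]] := core Hfl Hvd.
  exists D1; split=> //; split=> //.
  exists x0; split.
    move=> x; split=> _.
      by exists x; rewrite /frame_pt mulmx1 add0r.
    by move=> h hh hz; move: (nz h hh); rewrite hz eqxx.
  by exists tau.
move=> k o M hk [rf _] s [x0 [Hfl [tau [Hvd Hs]]]].
have [D1 [hD1 [sz1 [nz Hvd']]]] := core Hfl Hvd.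
have [D2 [hD2 [sz2 [z2 H2]]]] := flat_select rf Hfl.
exists (D1 ++ D2); split; first by move=> h; rewrite mem_cat => /orP [/hD1|/hD2].
split; first by rewrite size_cat; move: sz1 sz2 hk; move: (size D1) (size D2) => a b; clear; lia.
exists x0; split.
  move=> x; rewrite -Hfl; split.
    move=> Hx; apply: H2 => h hh; apply: Hx; first by rewrite mem_cat hh orbT.
    exact: z2.
  move=> Hx h; rewrite mem_cat => /orP [] hh; apply: Hx; [exact: hD1|exact: hD2].
exists tau; split=> //.
have E : (fun u => closed_cell (D1 ++ D2) x0 (frame_pt o M u)) =
         (fun u => closed_cell D1 x0 (frame_pt o M u)).
  apply: set_ext => u; split=> Hc h hh.
    by apply: Hc; rewrite mem_cat hh.
  move: hh; rewrite mem_cat => /orP [] hh; first exact: Hc.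
  have hz := z2 _ hh; rewrite hz; split.
    move=> _; have := (Hfl (frame_pt o M u)).2 (ex_intro _ u erefl); apply => //.
    exact: hD2.
  by split=> ?; lra.
by rewrite E.
Qed.
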